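(* Let $A,A'$ be alphabets with $A\subset A'$, and let $\mathbf a,\mathbf a'$ be weights with $\mathbf a'|_A=\mathbf a|_A$. Then the map $\Phi:\mathbb T^{A,\mathbf a}\to\mathbb T^{A',\mathbf a'}$, $\Phi([w])=[w]$ (for $w\in A^{\mathbb N}\subset(A')^{\mathbb N}$), is an isometric embedding. Moreover, if $A\subsetneq A'$, then $$\mathrm{dist}_H\big(\Phi(\mathbb T^{A,\mathbf a}),\mathbb T^{A',\mathbf a'}\big)\le\max_{j\in A'\setminus A}\mathbf a'(j).$$
   Context: An alphabet is $\mathbb N$ or $\{1,\dots,M\}$, $M\ge2$. For an alphabet $A$: $A^k$ words of length $k$ ($A^0=\{\varepsilon\}$), $A^*=\bigcup_kA^k$, $A^{\mathbb N}$ infinite words; $A^n_u$, $A^{\mathbb N}_u$: words beginning with $u\in A^*$; $w(n)$: length-$n$ prefix; $i^{(k)}$: $k$ copies of $i$. Graphs $G^A_k=(A^k,E^A_k)$: $E^A_1=\{\{1,i\}:i\in A\setminus\{1\}\}$, $E^A_{k+1}=\{\{12^{(k)},i1^{(k)}\}:i\in A\setminus\{1\}\}\cup\{\{iw,iu\}:i\in A,\{w,u\}\in E^A_k\}$. $A^{\mathbb N}_{u_1}\wedge A^{\mathbb N}_{u_2}$: the $w\in A^{\mathbb N}_{u_1}$ such that for every $n>\max\{|u_1|,|u_2|\}$ some $u\in A^n_{u_2}$ has $\{w(n),u\}\in E^A_n$, together with the symmetric set. Chain joining $w,w'$: list $A^{\mathbb N}_{v_1},\dots,A^{\mathbb N}_{v_N}$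 with $w\in A^{\mathbb N}_{v_1}$, $w'\in A^{\mathbb N}_{v_N}$, consecutive $\wedge$ nonempty. Weight: non-increasing $\mathbf a:\mathbb N\to(0,1/2]$, $\mathbf a(1)=\mathbf a(2)=1/2$, $\mathbf a(i)\to0$; $\Delta_{\mathbf a}(i_1\cdots i_k)=\prod\mathbf a(i_j)$, $\Delta_{\mathbf a}(\varepsilon)=1$. $\rho_{A,\mathbf a}(w,u)=\inf\sum_{i=1}^N\Delta_{\mathbf a}(v_i)$ over chains joining $w,u$; $\mathbb T^{A,\mathbf a}=A^{\mathbb N}/\{\rho_{A,\mathbf a}=0\}$ with metric $d_{A,\mathbf a}([w],[u])=\rho_{A,\mathbf a}(w,u)$. $\mathrm{dist}_H$ is the Hausdorff distance between subsets of $\mathbb T^{A',\mathbf a'}$. *)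

(* Defs.v *)
From mathcomp Require Import all_boot all_order all_algebra.
From mathcomp Require Import all_classical all_reals all_analysis.
Set Implicit Arguments. Unset Strict Implicit. Unset Printing Implicit Defensive.
Import Order.TTheory GRing.Theory Num.Theory.
Local Open Scope classical_set_scope.
Local Open Scope ring_scope.
Import numFieldNormedType.Exports.

(* An alphabet: [None] is N = {1,2,...}; [Some M] is {1,...,M} (need M >= 2). *)
Definition alphabet := option nat.

Definition alphabet_ok (A : alphabet) : Prop :=
  match A with None => True | Some M => (2 <= M)%N end.

Definition inA (A : alphabet) (i : nat) : bool :=
  match A with None => (0 < i)%N | Some M => (0 < i)%N && (i <= M)%N end.

(* finite words: seq nat; infinite words: nat -> nat (positions 0,1,2,...) *)
Definition fword_in (A : alphabet) (v : seq nat) : bool := all (inA A) v.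
Definition iword_in (A : alphabet) (w : nat -> nat) : Prop := forall n, inA A (w n).

Definition pref (w : nat -> nat) (n : nat) : seq nat := mkseq w n.

Definition cyl (u : seq nat) (w : nat -> nat) : Prop := pref w (size u) = u.

(* Edges of the graphs G^A_k, as a symmetric relation on finite words;
   edge_base with k = 0 gives E^A_1, and E^A_{k+1} is generated by
   edge_base (with k) and edge_step from E^A_k. *)
Inductive edge (A : alphabet) : seq nat -> seq nat -> Prop :=
| edge_base k i : inA A i -> i != 1%N ->
    edge A (1%N :: nseq k 2%N) (i :: nseq k 1%N)
| edge_step i w u : inA A i -> edge A w u -> edge A (i :: w) (i :: u)
| edge_sym w u : edge A w u -> edge A u w.

Definition meet_half (A : alphabet) (u1 u2 : seq nat) (w : nat -> nat) : Prop :=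
  cyl u1 w /\
  forall n, (maxn (size u1) (size u2) < n)%N ->
    exists u : seq nat, [/\ size u = n, fword_in A u, take (size u2) u = u2
                          & edge A (pref w n) u].

Definition meet (A : alphabet) (u1 u2 : seq nat) (w : nat -> nat) : Prop :=
  iword_in A w /\ (meet_half A u1 u2 w \/ meet_half A u2 u1 w).

Definition meet_nonempty (A : alphabet) (u1 u2 : seq nat) : Prop :=
  exists w, meet A u1 u2 w.

Definition chain (A : alphabet) (w w' : nat -> nat) (vs : seq (seq nat)) : Prop :=
  [/\ vs != [::], all (fword_in A) vs,
      cyl (head [::] vs) w, cyl (last [::] vs) w'
    & forall i, (i.+1 < size vs)%N -> meet_nonempty A (nth [::] vs i) (nth [::] vs i.+1)].

Definition weight {R : realType} (a : nat -> R) : Prop :=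
  [/\ forall i, (0 < i)%N -> a i.+1 <= a i,
      forall i, (0 < i)%N -> 0 < a i /\ a i <= 2^-1,
      a 1%N = 2^-1, a 2%N = 2^-1
    & a i @[i --> \oo] --> 0].

Definition Delta {R : realType} (a : nat -> R) (v : seq nat) : R :=
  \prod_(i <- v) a i.

Definition rho {R : realType} (A : alphabet) (a : nat -> R) (w u : nat -> nat) : R :=
  inf [set s : R | exists vs, chain A w u vs /\ s = \sum_(v <- vs) Delta a v].

(* Hausdorff distance, w.r.t. the pseudometric rho A a, between subsets of A^N
   (equivalently between their images in the quotient T^{A,a}). *)
Definition distH {R : realType} (A : alphabet) (a : nat -> R)
    (X Y : set (nat -> nat)) : R :=
  Num.max (sup [set inf [set rho A a x y | y in Y] | x in X])
          (sup [set inf [set rho A a x y | x in X] | y in Y]).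

(* Main.v *)
Require Import Defs.
From mathcomp Require Import all_boot all_order all_algebra.
From mathcomp Require Import all_classical all_reals all_analysis.
From mathcomp Require Import zify.
From Stdlib Require Import Lia.
Import Order.TTheory GRing.Theory Num.Theory.
Local Open Scope classical_set_scope.
Local Open Scope ring_scope.

Lemma edge_char (B : alphabet) (s t : seq nat) : edge B s t -> exists P i k, i != 1%N /\
  ((s = P ++ 1%N :: nseq k 2%N /\ t = P ++ i :: nseq k 1%N) \/
   (s = P ++ i :: nseq k 1%N /\ t = P ++ 1%N :: nseq k 2%N)).
Proof.
elim=> [k i _ hi|i w u _ _ [P [j [k [hj H]]]]|w u _ [P [j [k [hj H]]]]].
- by exists [::], i, k; split => //; left.
- exists (i :: P), j, k; split => //.
  by case: H => [[-> ->]|[-> ->]]; [left|right].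
- exists P, j, k; split => //; tauto.
Qed.

Lemma edge_mono (A A' : alphabet) s t : (forall i, inA A i -> inA A' i) ->
  edge A s t -> edge A' s t.
Proof.
move=> hA; elim=> [k i hi hi1|i w u hi _ IH|w u _ IH].
- by apply: edge_base => //; apply: hA.
- by apply: edge_step => //; apply: hA.
- exact: edge_sym.
Qed.

Lemma edge_mk B L i k : fword_in B L -> inA B i -> i != 1%N ->
  edge B (L ++ 1%N :: nseq k 2%N) (L ++ i :: nseq k 1%N).
Proof.
move=> + hi hi1; elim: L => [|x L IH] /=; first by move=> _; apply: edge_base.
by move/andP=> [hx hL]; apply: edge_step => //; apply: IH.
Qed.

Definition wL (L : seq nat) (n : nat) : nat := nth 2%N (L ++ [:: 1%N]) n.

Lemma pref_wL L n : pref (wL L) n = take n (L ++ 1%N :: nseq n 2%N).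
Proof.
apply: (@eq_from_nth _ 0%N).
  rewrite size_mkseq size_takel // size_cat /= size_nseq; lia.
move=> i; rewrite size_mkseq => hi.
rewrite nth_mkseq // nth_take // /wL !nth_cat.
case: ltnP => hiL; first by apply: set_nth_default.
case E: (i - size L)%N => [|k] //=.
rewrite nth_nseq nth_nil; case: ifP => // /negbT; rewrite -leqNgt; lia.
Qed.

Lemma pref_wL_ext L k : pref (wL L) (size L + k.+1) = L ++ 1%N :: nseq k 2%N.
Proof.
rewrite pref_wL take_cat ltnNge leq_addr /= addKn take_cons take_nseq //.
lia.
Qed.

Lemma pref_wL_le L n : (n <= size L)%N -> pref (wL L) n = take n L.
Proof.
move=> h; rewrite pref_wL take_cat; case: ltnP => // h2.
have -> : n = size L by apply/eqP; rewrite eqn_leq h h2.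
by rewrite subnn take0 cats0 take_size.
Qed.

Lemma iword_wL B L : fword_in B L -> inA B 1%N -> inA B 2%N -> iword_in B (wL L).
Proof.
move=> hL h1 h2 n; rewrite /wL.
case: (ltnP n (size (L ++ [:: 1%N]))) => hn; last by rewrite nth_default.
have : all (inA B) (L ++ [:: 1%N]) by rewrite all_cat; apply/andP; split => //=; rewrite h1.
by move/allP; apply; apply: mem_nth.
Qed.

Lemma half_special B L i a b : fword_in B L -> inA B i -> i != 1%N ->
  inA B 1%N ->
  meet_half B (L ++ 1%N :: nseq a 2%N) (L ++ i :: nseq b 1%N) (wL L).
Proof.
move=> hL hi hi1 h1; split.
  by rewrite /cyl size_cat /= size_nseq pref_wL_ext.
move=> n; rewrite !size_cat /= !size_nseq => hn.
have -> : n = (size L + (n - size L).-1.+1)%N by lia.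
set k := (n - size L).-1.
exists (L ++ i :: nseq k 1%N); split.
- by rewrite size_cat /= size_nseq.
- by rewrite /fword_in all_cat; apply/andP; split => //=; rewrite hi; apply/allP => x /nseqP [-> _].
- rewrite take_cat ltnNge leq_addr /= addKn take_cons take_nseq //; lia.
- by rewrite pref_wL_ext; apply: edge_mk.
Qed.

Lemma half_comp B L u1 u2 : fword_in B L -> inA B 1%N -> inA B 2%N ->
  u1 = take (size u1) L -> u2 = take (size u2) L ->
  (size L <= maxn (size u1) (size u2))%N ->
  meet_half B u1 u2 (wL L).
Proof.
move=> hL h1 h2 e1 e2 hs.
have s1 : (size u1 <= size L)%N by rewrite e1 size_take_min geq_minr.
have s2 : (size u2 <= size L)%N by rewrite e2 size_take_min geq_minr.
split; first by rewrite /cyl pref_wL_le.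
move=> n hn.
have -> : n = (size L + (n - size L).-1.+1)%N by lia.
set k := (n - size L).-1.
exists (L ++ 2%N :: nseq k 1%N); split.
- by rewrite size_cat /= size_nseq.
- by rewrite /fword_in all_cat; apply/andP; split => //=; rewrite h2; apply/allP => x /nseqP [-> _].
- rewrite take_cat; case: ltnP => h; first by rewrite -e2.
  have E : size u2 = size L by lia.
  rewrite E subnn take0 cats0; rewrite {1}e2 E take_size //.
- by rewrite pref_wL_ext; apply: edge_mk.
Qed.
Definition comp (u1 u2 : seq nat) := exists r, u2 = u1 ++ r.
Definition adj (u1 u2 : seq nat) := comp u1 u2 \/ comp u2 u1 \/
  exists p i a b, i != 1%N /\
   ((u1 = p ++ 1%N :: nseq a 2%N /\ u2 = p ++ i :: nseq b 1%N) \/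
    (u1 = p ++ i :: nseq b 1%N /\ u2 = p ++ 1%N :: nseq a 2%N)).

Lemma adj_sym u1 u2 : adj u1 u2 -> adj u2 u1.
Proof.
case=> [h|[h|[p [i [a [b [hi H]]]]]]]; [right; left|left|right; right] => //.
by exists p, i, a, b; split => //; tauto.
Qed.

Lemma pre_comp (Z u1 u2 : seq nat) : u1 = take (size u1) Z -> u2 = take (size u2) Z ->
  comp u1 u2 \/ comp u2 u1.
Proof.
move=> e1 e2; case: (leqP (size u1) (size u2)) => h.
- left; exists (drop (size u1) u2).
  by rewrite -{1}(cat_take_drop (size u1) u2) {1}e2 take_takel // -e1.
- right; exists (drop (size u2) u1).
  by rewrite -{1}(cat_take_drop (size u2) u1) {1}e1 take_takel // -?e2 //; apply: ltnW.
Qed.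

Lemma comp_adj u1 u2 : comp u1 u2 \/ comp u2 u1 -> adj u1 u2.
Proof. by case=> h; [left|right; left]. Qed.

Lemma takecatl (P x : seq nat) n : (n <= size P)%N -> take n (P ++ x) = take n P.
Proof.
move=> h; rewrite take_cat; case: ltnP => // h2.
have E : n = size P by apply/eqP; rewrite eqn_leq h h2.
by rewrite E subnn take0 cats0 take_size.
Qed.

Lemma take_pref (w : nat -> nat) k n : (k <= n)%N -> take k (pref w n) = pref w k.
Proof.
by move=> h; rewrite /pref /mkseq -map_take take_iota; congr (map _ (iota _ _)); lia.
Qed.

Lemma half_adj B u1 u2 w : meet_half B u1 u2 w -> adj u1 u2.
Proof.
move=> [c h]; set n := (maxn (size u1) (size u2)).+1.
have [u [su _ tu e]] := h n (ltnSn _).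
have [P [i [k [hi H]]]] := @edge_char B _ _ e.
have e1 : u1 = take (size u1) (pref w n) by rewrite take_pref ?c //; lia.
have e2 : u2 = take (size u2) u by rewrite tu.
have sp : size (pref w n) = n by rewrite size_mkseq.
have gen : forall x y, pref w n = P ++ x -> u = P ++ y -> 
   adj u1 u2 \/ ((size P < size u1) && (size P < size u2))%N.
  move=> x y ex ey.
  case: (leqP (size u1) (size P)) => h1.
    left; apply: comp_adj; apply: (@pre_comp (P ++ y)); last by rewrite -ey.
    by rewrite takecatl // -(@takecatl P x _ h1) -ex.
  case: (leqP (size u2) (size P)) => h2; last by right; apply/andP.
  left; apply: comp_adj; apply: (@pre_comp (P ++ x)); first by rewrite -ex.
  by rewrite takecatl // -(@takecatl P y _ h2) -ey.
have tk : forall (m : nat) (x y : nat) (kk : nat), (m <= kk)%N ->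
   take m.+1 (x :: nseq kk y) = x :: nseq m y.
  by move=> m x y kk hm; rewrite take_cons take_nseq.
case: H => [[ex ey]|[ex ey]].
- case: (gen _ _ ex ey) => // /andP [h1 h2].
  right; right; exists P, i, (size u1 - size P).-1, (size u2 - size P).-1.
  split => //; left; split.
  + rewrite {1}e1 ex take_cat ltnNge (ltnW h1) /=.
    have -> : (size u1 - size P = (size u1 - size P).-1.+1)%N by lia.
    rewrite tk //; move: sp; rewrite ex size_cat /= size_nseq /n; lia.
  + rewrite {1}e2 ey take_cat ltnNge (ltnW h2) /=.
    have -> : (size u2 - size P = (size u2 - size P).-1.+1)%N by lia.
    rewrite tk //; move: su; rewrite ey size_cat /= size_nseq /n; lia.
- case: (gen _ _ ex ey) => // /andP [h1 h2].
  right; right; exists P, i, (size u2 - size P).-1, (size u1 - size P).-1.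
  split => //; right; split.
  + rewrite {1}e1 ex take_cat ltnNge (ltnW h1) /=.
    have -> : (size u1 - size P = (size u1 - size P).-1.+1)%N by lia.
    rewrite tk //; move: sp; rewrite ex size_cat /= size_nseq /n; lia.
  + rewrite {1}e2 ey take_cat ltnNge (ltnW h2) /=.
    have -> : (size u2 - size P = (size u2 - size P).-1.+1)%N by lia.
    rewrite tk //; move: su; rewrite ey size_cat /= size_nseq /n; lia.
Qed.

Lemma meet_adj B u1 u2 : meet_nonempty B u1 u2 -> adj u1 u2.
Proof.
by move=> [w [_ [h|h]]]; [apply: half_adj h|apply: adj_sym; apply: half_adj h].
Qed.

Lemma fw_cat B u v : fword_in B (u ++ v) = fword_in B u && fword_in B v.
Proof. exact: all_cat. Qed.

Lemma adj_meet A u1 u2 : inA A 1%N -> inA A 2%N -> fword_in A u1 -> fword_in A u2 ->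
  adj u1 u2 -> meet_nonempty A u1 u2.
Proof.
move=> h1 h2 f1 f2 [[r e]|[[r e]|[p [i [a [b [hi H]]]]]]].
- exists (wL u2); split; first exact: iword_wL.
  left; apply: half_comp => //; rewrite ?take_size //.
    by rewrite e take_size_cat.
  by rewrite leq_maxr.
- exists (wL u1); split; first exact: iword_wL.
  left; apply: half_comp => //; rewrite ?take_size //.
    by rewrite e take_size_cat.
  by rewrite leq_maxl.
- case: H => [[-> e2]|[e1 ->]].
  + move: f2; rewrite e2 fw_cat => /andP [fp /andP [fi _]].
    exists (wL p); split; first exact: iword_wL.
    by left; apply: half_special.
  + move: f1; rewrite e1 fw_cat => /andP [fp /andP [fi _]].
    exists (wL p); split; first exact: iword_wL.
    by right; apply: half_special.
Qed.

Lemma meet_mono A A' u1 u2 : (forall i, inA A i -> inA A' i) ->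
  meet_nonempty A u1 u2 -> meet_nonempty A' u1 u2.
Proof.
move=> hA [w [iw H]].
have hf : forall v, fword_in A v -> fword_in A' v.
  by move=> v /allP hv; apply/allP => x /hv; apply: hA.
have hh : forall x y, meet_half A x y w -> meet_half A' x y w.
  move=> x y [c h]; split => // n hn.
  have [u [s f t e]] := h n hn; exists u; split => //; first exact: hf.
  exact: edge_mono e.
exists w; split; first by move=> n; apply: hA.
by case: H => H; [left|right]; apply: hh.
Qed.

Definition notA (A : alphabet) := [pred x | ~~ inA A x].
Definition qA (A : alphabet) (v : seq nat) := take (find (notA A) v) v.
Definition proj (A : alphabet) (m : nat) (v : seq nat) :=
  if fword_in A v then v else qA A v ++ 1%N :: nseq m 2%N.

Lemma has_notA A v : has (notA A) v = ~~ fword_in A v.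
Proof. by rewrite /fword_in -has_predC. Qed.

Lemma qA_fw A v : fword_in A (qA A v).
Proof.
apply/(all_nthP 0%N) => i; rewrite /qA size_take_min => hi.
rewrite nth_take; last by move: hi; rewrite leq_min => /andP [].
have := @before_find _ 0%N (notA A) v i.
by rewrite /= => /(_ (leq_trans hi (geq_minl _ _))) /negbFE.
Qed.

Lemma qA_id A v : fword_in A v -> qA A v = v.
Proof.
move=> h; rewrite /qA; have : ~~ has (notA A) v by rewrite has_notA h.
by rewrite has_find -leqNgt => /take_oversize.
Qed.

Lemma qA_cat_n A u r : ~~ fword_in A u -> qA A (u ++ r) = qA A u.
Proof.
move=> h; have hh : has (notA A) u by rewrite has_notA.
rewrite /qA find_cat hh take_cat.
by move: hh; rewrite has_find => ->.
Qed.

Lemma qA_cat_y A u r : fword_in A u -> qA A (u ++ r) = u ++ qA A r.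
Proof.
move=> h; have hh : has (notA A) u = false by rewrite has_notA h.
by rewrite /qA find_cat hh take_cat ltnNge leq_addr /= addKn.
Qed.

Lemma qA_cons_n A i r : ~~ inA A i -> qA A (i :: r) = [::].
Proof. by move=> h; rewrite /qA /= h. Qed.

Lemma proj_fw A m v : inA A 1%N -> inA A 2%N -> fword_in A (proj A m v).
Proof.
move=> h1 h2; rewrite /proj; case: ifP => // _.
rewrite fw_cat qA_fw /= h1; by apply/allP => x /nseqP [-> _].
Qed.

Lemma comp_nseq p m1 m2 :
  adj (p ++ 1%N :: nseq m1 2%N) (p ++ 1%N :: nseq m2 2%N).
Proof.
apply: comp_adj; case: (leqP m1 m2) => h.
- left; exists (nseq (m2 - m1) 2%N).
  by rewrite -catA /= -nseqD subnKC.
- right; exists (nseq (m1 - m2) 2%N).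
  by rewrite -catA /= -nseqD subnKC // ltnW.
Qed.

Lemma proj_comp A m1 m2 u1 u2 : comp u1 u2 -> adj (proj A m1 u1) (proj A m2 u2).
Proof.
move=> [r ->]; rewrite /proj fw_cat.
case f1: (fword_in A u1) => /=.
  case f2: (fword_in A r) => /=.
    by left; exists r.
  by left; exists (qA A r ++ 1%N :: nseq m2 2%N); rewrite qA_cat_y // catA.
by rewrite qA_cat_n ?f1 //; apply: comp_nseq.
Qed.

Lemma proj_adj A m1 m2 u1 u2 : inA A 1%N -> inA A 2%N ->
  adj u1 u2 -> adj (proj A m1 u1) (proj A m2 u2).
Proof.
move=> h1 h2 [h|[h|[p [i [a [b [hi H]]]]]]].
- exact: proj_comp.
- by apply: adj_sym; apply: proj_comp.
- have gen : forall m1 m2,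
      adj (proj A m1 (p ++ 1%N :: nseq a 2%N)) (proj A m2 (p ++ i :: nseq b 1%N)).
    move=> n1 n2; rewrite /proj !fw_cat.
    have fn1 : fword_in A (1%N :: nseq a 2%N).
      by rewrite /= h1; apply/allP => x /nseqP [-> _].
    have fn2 : inA A i -> fword_in A (i :: nseq b 1%N).
      by move=> hi'; rewrite /= hi'; apply/allP => x /nseqP [-> _].
    rewrite fn1 andbT.
    case fp: (fword_in A p); rewrite ?andTb ?andFb.
      case hiA: (inA A i).
        rewrite fn2 //; right; right; exists p, i, a, b; split => //; left; split => //.
      have -> : fword_in A (i :: nseq b 1%N) = false by rewrite /= hiA.
      rewrite qA_cat_y // qA_cons_n ?hiA // cats0.
      exact: comp_nseq.
    by rewrite !qA_cat_n ?fp //; apply: comp_nseq.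
  case: H => [[-> ->]|[-> ->]]; first exact: gen.
  by apply: adj_sym; apply: gen.
Qed.

Section Reals.
Variable R : realType.

Lemma inA_pos B i : inA B i -> (0 < i)%N.
Proof. by case: B => [M|] //= /andP []. Qed.

Lemma geo (c : R) : 0 < c -> exists m, (2^-1) ^+ m <= c.
Proof.
move=> hc; exists (Num.Def.archi_bound c^-1).
set n := Num.Def.archi_bound c^-1.
rewrite exprVn -natrX invf_ple ?posrE ?ltr0n ?expn_gt0 //.
apply: (le_trans (ltW (archi_boundP _))); first by rewrite invr_ge0 ltW.
by rewrite ler_nat ltnW // ltn_expl.
Qed.

Lemma prod_ge0 (F : nat -> R) v : (forall x, x \in v -> 0 <= F x) ->
  0 <= \prod_(x <- v) F x.
Proof.
elim: v => [|x v IH] h; first by rewrite big_nil.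
rewrite big_cons mulr_ge0 ?h ?mem_head //.
by apply: IH => y hy; apply: h; rewrite in_cons hy orbT.
Qed.

Lemma prod_gt0 (F : nat -> R) v : (forall x, x \in v -> 0 < F x) ->
  0 < \prod_(x <- v) F x.
Proof.
elim: v => [|x v IH] h; first by rewrite big_nil.
rewrite big_cons mulr_gt0 ?h ?mem_head //.
by apply: IH => y hy; apply: h; rewrite in_cons hy orbT.
Qed.

Lemma prod_geo (F : nat -> R) v : (forall x, x \in v -> 0 <= F x <= 2^-1) ->
  \prod_(x <- v) F x <= (2^-1) ^+ size v.
Proof.
elim: v => [|x v IH] h; first by rewrite big_nil.
rewrite big_cons /= exprS.
have /andP [h0 h1] := h x (mem_head _ _).
apply: ler_pM => //.
  apply: prod_ge0 => y hy.
  have hy' : y \in x :: v by rewrite in_cons hy orbT.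
  by have /andP [] := h y hy'.
by apply: IH => y hy; apply: h; rewrite in_cons hy orbT.
Qed.

Lemma geo_le1 n : (2^-1 : R) ^+ n <= 1.
Proof. by rewrite exprn_ile1 // ?invr_ge0 ?ler0n // invf_le1 ?ltr0n // ler1n. Qed.

Lemma weight_pos (a : nat -> R) B i : weight a -> inA B i -> 0 < a i /\ a i <= 2^-1.
Proof. by move=> [_ h _ _ _] /inA_pos /h. Qed.
Arguments weight_pos {a B i}.

Lemma Delta_cat (c : nat -> R) u v : Delta c (u ++ v) = Delta c u * Delta c v.
Proof. by rewrite /Delta big_cat. Qed.

Lemma Delta_cons (c : nat -> R) x v : Delta c (x :: v) = c x * Delta c v.
Proof. by rewrite /Delta big_cons. Qed.

Lemma Delta_nseq (c : nat -> R) m x : Delta c (nseq m x) = c x ^+ m.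
Proof. by elim: m => [|m IH]; rewrite /Delta ?big_nil // big_cons -/(Delta _ _) IH exprS. Qed.

Lemma Delta_ge0 (a : nat -> R) B v : weight a -> fword_in B v -> 0 <= Delta a v.
Proof.
move=> wa /allP hv; apply: prod_ge0 => x /hv hx.
by have [] := weight_pos wa hx => /ltW.
Qed.

Arguments Delta_ge0 {a B v}.
Lemma Delta_geo (a : nat -> R) B v : weight a -> fword_in B v ->
  Delta a v <= (2^-1) ^+ size v.
Proof.
move=> wa /allP hv; apply: prod_geo => x /hv hx.
by have [h1 h2] := weight_pos wa hx; rewrite (ltW h1) h2.
Qed.

Arguments Delta_geo {a B v}.
Lemma Delta_le1 (a : nat -> R) B v : weight a -> fword_in B v -> Delta a v <= 1.
Proof. by move=> wa hv; apply: le_trans (Delta_geo wa hv) (geo_le1 _). Qed.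

Arguments Delta_le1 {a B v}.
Lemma sum_ge0 (F : seq nat -> R) vs : (forall v, v \in vs -> 0 <= F v) ->
  0 <= \sum_(v <- vs) F v.
Proof.
elim: vs => [|x v IH] h; first by rewrite big_nil.
rewrite big_cons addr_ge0 ?h ?mem_head //.
by apply: IH => y hy; apply: h; rewrite in_cons hy orbT.
Qed.

Lemma chain_triv B w u : chain B w u [:: [::]].
Proof. by split => // i; rewrite ltnS ltn0. Qed.

Definition cset B (c : nat -> R) w u :=
  [set s : R | exists vs, chain B w u vs /\ s = \sum_(v <- vs) Delta c v].

Lemma cset_lb B (c : nat -> R) w u : weight c -> lbound (cset B c w u) 0.
Proof.
move=> wc s [vs [[_ /allP hall _ _ _] ->]].
by apply: sum_ge0 => v /hall hv; apply: Delta_ge0 wc hv.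
Qed.

Lemma cset_ne B (c : nat -> R) w u : cset B c w u !=set0.
Proof. by exists (\sum_(v <- [:: [::]]) Delta c v), [:: [::]]; split => //; apply: chain_triv. Qed.

Lemma rho_ge0 B (c : nat -> R) w u : weight c -> 0 <= rho B c w u.
Proof. by move=> wc; apply: lb_le_inf; [apply: cset_ne|apply: cset_lb]. Qed.

Lemma rho_le B (c : nat -> R) w u vs : weight c -> chain B w u vs ->
  rho B c w u <= \sum_(v <- vs) Delta c v.
Proof.
move=> wc hc; apply: (ge_inf (E := cset B c w u)).
  by exists 0; apply: cset_lb.
by exists vs.
Qed.

Lemma pref_fw B w n : iword_in B w -> fword_in B (pref w n).
Proof. by move=> hw; apply/allP => x /mapP [i _ ->]; apply: hw. Qed.

End Reals.
Arguments weight_pos {R a B i}. Arguments Delta_ge0 {R a B v}. Arguments Delta_geo {R a B v}.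
Arguments Delta_le1 {R a B v}. Arguments rho_le {R B c w u vs}. Arguments geo {R c}.
Arguments rho_ge0 {R B c w u}.

Section Iso.
Variable R : realType.
Variables (A A' : alphabet) (a a' : nat -> R).
Hypothesis hA : forall i, inA A i -> inA A' i.
Hypothesis h1 : inA A 1%N.
Hypothesis h2 : inA A 2%N.
Hypothesis wa : weight a.
Hypothesis wa' : weight a'.
Hypothesis agree : forall i, inA A i -> a' i = a i.

Lemma Delta_agree v : fword_in A v -> Delta a' v = Delta a v.
Proof. by move=> /allP hv; apply: eq_big_seq => x /hv; apply: agree. Qed.

Lemma fw_mono v : fword_in A v -> fword_in A' v.
Proof. by move=> /allP hv; apply/allP => x /hv; apply: hA. Qed.

Lemma cost v : exists m, fword_in A' v -> Delta a (proj A m v) <= Delta a' v.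
Proof.
case fv: (fword_in A v).
  by exists 0%N => _; rewrite /proj fv Delta_agree.
have hh : has (notA A) v by rewrite has_notA fv.
set k := find (notA A) v.
have hk : (k < size v)%N by rewrite /k -has_find.
set j := nth 0%N v k.
have hj : ~~ inA A j by have := nth_find 0%N hh.
have ev : v = take k v ++ j :: drop k.+1 v by rewrite -drop_nth // cat_take_drop.
have hd : forall x, x \in v -> fword_in A' v -> 0 < a' x.
  by move=> x hx /allP /(_ x hx) /(weight_pos wa') [].
have hjv : j \in v by apply: mem_nth.
set c := a' j * Delta a' (drop k.+1 v).
case: (pselect (fword_in A' v)) => fv'; last first.
  by exists 0%N.
have cpos : 0 < c.
  rewrite mulr_gt0 ?hd //; apply: prod_gt0 => x hx; apply: hd => //.
  exact: mem_drop hx.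
have [m hm] := geo cpos.
exists m => _.
rewrite {2}ev Delta_cat Delta_cons -/c /proj fv Delta_cat Delta_cons Delta_nseq.
rewrite (Delta_agree _ (qA_fw A v)) /qA -/k.
apply: ler_wpM2l; first exact: (Delta_ge0 wa (qA_fw A v)).
have [_ _ -> -> _] := wa.
apply: le_trans hm.
by rewrite ler_piMl ?exprn_ge0 ?invr_ge0 ?ler0n // invf_le1 ?ltr0n // ler1n.
Qed.

Lemma head_fw w u vs : iword_in A w -> chain A' w u vs -> fword_in A (head [::] vs).
Proof. by move=> hw [_ _ c _ _]; rewrite -c; apply: pref_fw. Qed.

Lemma last_fw w u vs : iword_in A u -> chain A' w u vs -> fword_in A (last [::] vs).
Proof. by move=> hu [_ _ _ c _]; rewrite -c; apply: pref_fw. Qed.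

Lemma rho_iso2 w u : iword_in A w -> iword_in A u -> rho A a w u <= rho A' a' w u.
Proof.
move=> hw hu.
have [f hf] := choice cost.
apply: lb_le_inf; first exact: cset_ne.
move=> s [vs [hc ->]].
set g := fun v => proj A (f v) v.
have gid : forall v, fword_in A v -> g v = v by move=> v hv; rewrite /g /proj hv.
have hc' : chain A w u (map g vs).
  have hc0 := hc; case: hc0 => [ne al ch cl cm]; split.
  - by case: vs ne {hc ch cl cm al}.
  - by rewrite all_map; apply/allP => v _ /=; apply: proj_fw.
  - have hf0 := head_fw _ _ _ hw hc; move: ch hf0.
    by case: (vs) ne => // v0 vs0 _ /= ch0 hf0; rewrite gid.
  - have -> : last [::] (map g vs) = g (last [::] vs) by rewrite -(last_map g).
    by rewrite gid // (last_fw _ _ _ hu hc).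
  - move=> i; rewrite size_map => hi.
    rewrite !(nth_map [::]) //; last by apply: ltnW.
    apply: adj_meet => //; try exact: proj_fw.
    by apply: proj_adj => //; apply: (@meet_adj A'); apply: cm.
apply: le_trans (rho_le wa hc') _.
rewrite big_map [X in _ <= X]big_seq [X in X <= _]big_seq.
apply: ler_sum => v hv; apply: hf.
by case: hc => _ /allP al _ _ _; apply: al.
Qed.

Lemma rho_iso1 w u : rho A' a' w u <= rho A a w u.
Proof.
apply: lb_le_inf; first exact: cset_ne.
move=> s [vs [[ne al ch cl cm] ->]].
have hc : chain A' w u vs.
  split => //.
    by apply/allP => v hv; apply: fw_mono; move/allP: al; apply.
  by move=> i hi; apply: (@meet_mono A A' _ _ hA); apply: cm.
apply: le_trans (rho_le wa' hc) _.
rewrite le_eqVlt; apply/orP; left; apply/eqP.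
rewrite big_seq [RHS]big_seq; apply: eq_bigr => v hv.
by apply: Delta_agree; move/allP: al; apply.
Qed.

End Iso.

Lemma inf_le_of (R : realType) (E : set R) y t : lbound E 0 -> E y -> y <= t -> inf E <= t.
Proof.
move=> lb Ey yt; apply: le_trans yt; apply: (ge_inf (E := E)) => //.
by exists 0.
Qed.

Lemma half_le1 (R : realType) : (0 <= (2^-1 : R)) && ((2^-1 : R) <= 1).
Proof. by rewrite invr_ge0 ler0n /= invf_le1 ?ltr0n // ler1n. Qed.

Lemma rho_self (R : realType) B (c : nat -> R) x e : weight c -> iword_in B x -> 0 < e ->
  rho B c x x <= e.
Proof.
move=> wc hx he; have [m hm] := geo he.
have hc : chain B x x [:: pref x m].
  split; [done| by rewrite /= andbT; apply: pref_fw | by rewrite /cyl /= size_mkseq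
    | by rewrite /cyl /= size_mkseq | by move=> i; rewrite ltnS ltn0].
apply: le_trans (rho_le wc hc) _.
rewrite big_cons big_nil addr0; apply: le_trans hm.
by have := Delta_geo wc (@pref_fw B x m hx); rewrite size_mkseq.
Qed.

Arguments rho_self {R B c x e}.
Lemma okA12 A : alphabet_ok A -> inA A 1%N /\ inA A 2%N.
Proof. by case: A => [M|] //= h; rewrite h; split => //; apply: ltnW. Qed.

Theorem lemma5p10 (R : realType) (A A' : alphabet) (a a' : nat -> R) :
  alphabet_ok A -> alphabet_ok A' ->
  (forall i, inA A i -> inA A' i) ->
  weight a -> weight a' ->
  (forall i, inA A i -> a' i = a i) ->
  (forall w u, iword_in A w -> iword_in A u -> rho A' a' w u = rho A a w u) /\
  ((exists j, inA A' j /\ ~~ inA A j) ->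
   distH A' a' (iword_in A) (iword_in A')
     <= sup [set a' j | j in [set j | inA A' j /\ ~~ inA A j]]).
Proof.
move=> okA okA' hA wa wa' agree.
have [h1 h2] := @okA12 A okA.
have h1' := hA _ h1; have h2' := hA _ h2.
have fwm : forall v, fword_in A v -> fword_in A' v.
  by move=> v /allP hv; apply/allP => x /hv; apply: hA.
split.
  move=> w u hw hu; apply/le_anti/andP; split.
    exact: rho_iso1.
  exact: rho_iso2.
move=> [j0 [hj0 hj0']].
set S := sup _.
have hasS : has_ubound [set a' j | j in [set j | inA A' j /\ ~~ inA A j]].
  exists 2^-1 => _ [j [hj _] <-].
  by have [] := weight_pos wa' hj.
have Sj : forall j, inA A' j -> ~~ inA A j -> a' j <= S.
  by move=> j hj hj'; apply: ub_le_sup => //; exists j.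
have S0 : 0 <= S.
  apply: le_trans (Sj _ hj0 hj0').
  by have [/ltW] := weight_pos wa' hj0.
have lbE : forall X (f : (nat -> nat) -> R), (forall x, 0 <= f x) -> lbound [set f x | x in X] 0.
  by move=> X f hf _ [x _ <-].
have iw0 : iword_in A (wL [::]) by apply: iword_wL.
rewrite /distH ge_max; apply/andP; split.
  apply: ge_sup; first by eexists; exists (wL [::]).
  move=> _ [x hx <-]; apply/ler_addgt0Pr => e he.
  have hx' : iword_in A' x by move=> n; apply: hA.
  apply: (@inf_le_of _ _ (rho A' a' x x)).
  - by apply: lbE => y; apply: rho_ge0.
  - by exists x.
  - apply: le_trans (rho_self wa' hx' he) _.
    by rewrite lerDr.
apply: ge_sup; first by eexists; exists (wL [::]) => //; move=> n; apply: hA.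
move=> _ [y hy <-]; apply/ler_addgt0Pr => e he.
case: (pselect (iword_in A y)) => hyA.
  apply: (@inf_le_of _ _ (rho A' a' y y)).
  - by apply: lbE => x; apply: rho_ge0.
  - by exists y.
  - apply: le_trans (rho_self wa' hy he) _.
    by rewrite lerDr.
have ex : exists n, (fun n => ~~ inA A (y n)) n.
  apply: contrapT => hn; apply: hyA => n; apply/negPn/negP => hn'.
  by apply: hn; exists n.
case: (ex_minnP ex) => p hp hmin.
set v := pref y p.
have fv : fword_in A v.
  apply/allP => x /mapP [i hi ->]; apply/negPn/negP => h.
  by have := hmin i h; rewrite mem_iota in hi; move: hi; lia.
set j := y p.
have hj' : inA A' j by apply: hy.
have hj1 : j != 1%N by apply/eqP => ej; move: hp; rewrite -/j ej h1.
have [m hm] := geo he.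
have fv' := fwm _ fv.
have hc : chain A' (wL v) y [:: v ++ 1%N :: nseq m 2%N; v ++ [:: j]].
  split => //.
  - rewrite /= !fw_cat fv' /= hj' h1' /= andbT.
    by apply/allP => x /nseqP [-> _].
  - by rewrite /cyl /= size_cat /= size_nseq pref_wL_ext.
  - by rewrite /cyl /= size_cat /= addn1 /v size_mkseq /pref mkseqS cats1.
  - case=> [|i] //= _.
    exists (wL v); split; first exact: iword_wL.
    by left; apply: (@half_special A' v j m 0%N).
apply: (@inf_le_of _ _ (rho A' a' (wL v) y)).
- by apply: lbE => x; apply: rho_ge0.
- by exists (wL v) => //; apply: iword_wL.
apply: le_trans (rho_le wa' hc) _.
rewrite big_cons big_cons big_nil addr0 addrC.
apply: lerD.
  rewrite Delta_cat Delta_cons {2}/Delta big_nil mulr1.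
  apply: le_trans (Sj _ hj' hp).
  rewrite ler_piMl ?(Delta_le1 wa' fv') //.
  by have [/ltW] := weight_pos wa' hj'.
apply: le_trans hm.
apply: le_trans (@Delta_geo R a' A' _ wa' _) _.
  rewrite fw_cat; apply/andP; split => //=; rewrite h1'; by apply/allP => x /nseqP [-> _].
have /andP [hh0 hh1] := half_le1 R.
apply: ler_wiXn2l => //.
by rewrite size_cat /= size_nseq; lia.
Qed.
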